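(* Let $G$ be a SIN topological group, $\xi=(E\xrightarrow{p}X)$ a numerable principal $G$-bundle, $C$ an $X$-groupoid, $\mathcal G$ the gauge group of $\xi$ and $\mathcal R(C,\xi)$ the set of representations of $C$ on $\xi$. Then the right action $\mathcal R(C,\xi)\times\mathcal G\to\mathcal R(C,\xi)$, $(w,\chi)\mapsto w^\chi$, is uniformly continuous for the uniform structures $\mathbf U_{\mathcal R}$ on $\mathcal R(C,\xi)$ and $\mathbf U_{\mathcal G}$ on $\mathcal G$.
   Context: SIN: the identity has a fundamental system of conjugation-invariant neighbourhoods. $X$-groupoid: a space $C$ with continuous source/target $\alpha,\beta:C\to X$, continuous associative partial composition on $\{(c_1,c_2):\alpha(c_1)=\beta(c_2)\}$ with $\alpha(c_1c_2)=\alpha(c_2)$, $\beta(c_1c_2)=\beta(c_1)$, continuous units and continuous inversion exchanging source and target. A representation of $C$ on $\xi$ is a continuous $w:C\times_XE\to E$ (fiber product over $\alpha$, $p$) with $p(w(c,z))=\beta(c)$, $w(cd,z)=w(c,w(d,z))$, $w(c^{-1},w(c,z))=z$, $w(c,zg)=w(c,z)g$. Gauge group $\mathcal G$: $G$-equivariant homeomorphisms $\chi$ of $E$ with $p\chi=p$; action $w^\chi(c,z)=\chi^{-1}(w(c,\chi(z)))$. Let $\gamma:E\times_XE\to G$ be defined by $y=z\gamma(y,z)$ and $\mathcal V_G$ the set of open symmetric neighbourhoods of $e$ in $G$. $\mathbf U_{\mathcal G}$ has fundamental entourages $\{(\chi,\tilde\chi):\gamma(\chi(z),\tilde\chi(z))\in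 V\ \forall z\in p^{-1}(K)\}$ ($K\subset X$ compact, $V\in\mathcal V_G$). $\mathbf U_{\mathcal R}$ has fundamental entourages $\mathcal O^{\mathcal R}(L,V)=\{(w,\tilde w):\gamma(w(c,z),\tilde w(c,z))\in V\ \forall(c,z)\in L\times_XE\}$ ($L\subset C$ compact, $V\in\mathcal V_G$). The product carries the product uniform structure. *)

(* Defs.v *)
From HB Require Import structures.
From mathcomp Require Import all_boot all_order all_algebra.
From mathcomp Require Import all_classical all_reals all_analysis.
From mathcomp Require Import Rstruct Rstruct_topology.
Set Implicit Arguments. Unset Strict Implicit. Unset Printing Implicit Defensive.
Import Order.TTheory GRing.Theory Num.Theory.
Local Open Scope classical_set_scope.
Local Open Scope ring_scope.

Record TopGroup (G : topologicalType) := {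
  tg_mul : G -> G -> G;
  tg_inv : G -> G;
  tg_one : G;
  tg_mulA : forall x y z, tg_mul x (tg_mul y z) = tg_mul (tg_mul x y) z;
  tg_mul1 : forall x, tg_mul tg_one x = x;
  tg_mulV : forall x, tg_mul (tg_inv x) x = tg_one;
  tg_mul_cont : continuous (fun xy : G * G => tg_mul xy.1 xy.2);
  tg_inv_cont : continuous tg_inv }.

Definition SIN (G : topologicalType) (TG : TopGroup G) : Prop :=
  forall U : set G, nbhs (tg_one TG) U ->
    exists V : set G, [/\ nbhs (tg_one TG) V, V `<=` U &
      forall g x, V x -> V (tg_mul TG (tg_mul TG g x) (tg_inv TG g))].

Definition sym_open_nbhd (G : topologicalType) (TG : TopGroup G) (V : set G) :=
  [/\ open V, V (tg_one TG) & forall g, V g -> V (tg_inv TG g)].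

Record principal_bundle (G : topologicalType) (TG : TopGroup G)
    (E X : topologicalType) := {
  pb_p : E -> X;
  pb_act : E -> G -> E;
  pb_p_cont : continuous pb_p;
  pb_p_surj : forall x, exists z, pb_p z = x;
  pb_act_cont : continuous (fun zg : E * G => pb_act zg.1 zg.2);
  pb_act_one : forall z, pb_act z (tg_one TG) = z;
  pb_act_mul : forall z g h, pb_act (pb_act z g) h = pb_act z (tg_mul TG g h);
  pb_p_act : forall z g, pb_p (pb_act z g) = pb_p z;
  pb_free : forall z g h, pb_act z g = pb_act z h -> g = h;
  pb_gamma : E -> E -> G;
  pb_gammaP : forall y z, pb_p y = pb_p z -> y = pb_act z (pb_gamma y z);
  pb_gamma_cont : {within [set yz : E * E | pb_p yz.1 = pb_p yz.2],
                    continuous (fun yz => pb_gamma yz.1 yz.2)} }.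

Section Bundle.
Context (G : topologicalType) (TG : TopGroup G) (E X : topologicalType)
        (xi : principal_bundle TG E X).
Local Notation p := (pb_p xi).
Local Notation act := (pb_act xi).

Definition trivial_over (U : set X) : Prop :=
  exists (phi : X * G -> E) (psi : E -> X * G),
  [/\ {within U `*` setT, continuous phi} /\
      {within p @^-1` U, continuous psi},
      (forall x g, U x -> p (phi (x, g)) = x),
      (forall x g h, U x -> phi (x, tg_mul TG g h) = act (phi (x, g)) h),
      (forall x g, U x -> psi (phi (x, g)) = (x, g)) &
      (forall z, U (p z) -> phi (psi z) = z)].

Definition numerable_cover (I : Type) (U : I -> set X) : Prop :=
  (forall i, open (U i)) /\ (forall x, exists i, U i x) /\
  exists u : I -> X -> Rdefinitions.R,
  [/\ (forall i, continuous (u i)),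
      (forall i x, 0 <= u i x <= 1),
      (forall i, [set x | 0 < u i x] `<=` U i),
      (forall x : X, exists N, nbhs x N /\ exists F : seq I,
           forall i, (exists y, N y /\ u i y != 0) -> List.In i F) &
      (forall x, exists F : seq I, [/\ List.NoDup F,
           (forall i, u i x != 0 -> List.In i F) & \sum_(i <- F) u i x = 1])].

Definition numerable : Prop :=
  exists (I : Type) (U : I -> set X), numerable_cover U /\ forall i, trivial_over (U i).

Record gauge_elt := {
  ga_fun : E -> E;
  ga_inv : E -> E;
  ga_fun_cont : continuous ga_fun;
  ga_inv_cont : continuous ga_inv;
  ga_funK : forall z, ga_inv (ga_fun z) = z;
  ga_invK : forall z, ga_fun (ga_inv z) = z;
  ga_equiv : forall z g, ga_fun (act z g) = act (ga_fun z) g;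
  ga_p : forall z, p (ga_fun z) = p z }.

Definition ent_gauge (K : set X) (V : set G) (chi chi' : gauge_elt) : Prop :=
  forall z, K (p z) -> V (pb_gamma xi (ga_fun chi z) (ga_fun chi' z)).

End Bundle.

Record groupoid (X C : topologicalType) := {
  gd_src : C -> X;
  gd_tgt : C -> X;
  gd_comp : C -> C -> C;
  gd_unit : X -> C;
  gd_inv : C -> C;
  gd_src_cont : continuous gd_src;
  gd_tgt_cont : continuous gd_tgt;
  gd_comp_cont : {within [set cd : C * C | gd_src cd.1 = gd_tgt cd.2],
                   continuous (fun cd => gd_comp cd.1 cd.2)};
  gd_compA : forall c1 c2 c3, gd_src c1 = gd_tgt c2 -> gd_src c2 = gd_tgt c3 ->
     gd_comp c1 (gd_comp c2 c3) = gd_comp (gd_comp c1 c2) c3;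
  gd_src_comp : forall c1 c2, gd_src c1 = gd_tgt c2 ->
     gd_src (gd_comp c1 c2) = gd_src c2;
  gd_tgt_comp : forall c1 c2, gd_src c1 = gd_tgt c2 ->
     gd_tgt (gd_comp c1 c2) = gd_tgt c1;
  gd_unit_cont : continuous gd_unit;
  gd_src_unit : forall x, gd_src (gd_unit x) = x;
  gd_tgt_unit : forall x, gd_tgt (gd_unit x) = x;
  gd_unitl : forall c, gd_comp (gd_unit (gd_tgt c)) c = c;
  gd_unitr : forall c, gd_comp c (gd_unit (gd_src c)) = c;
  gd_inv_cont : continuous gd_inv;
  gd_src_inv : forall c, gd_src (gd_inv c) = gd_tgt c;
  gd_tgt_inv : forall c, gd_tgt (gd_inv c) = gd_src c;
  gd_invl : forall c, gd_comp (gd_inv c) c = gd_unit (gd_src c);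
  gd_invr : forall c, gd_comp c (gd_inv c) = gd_unit (gd_tgt c) }.

Section Reps.
Context (G : topologicalType) (TG : TopGroup G) (E X C : topologicalType)
        (xi : principal_bundle TG E X) (Cg : groupoid X C).
Local Notation p := (pb_p xi).
Local Notation act := (pb_act xi).
Local Notation alpha := (gd_src Cg).
Local Notation beta := (gd_tgt Cg).

(* w : C x_X E -> E, represented as a curried function; only its values on
   the fibre product {(c,z) | alpha c = p z} matter. *)
Definition is_rep (w : C -> E -> E) : Prop :=
  [/\ {within [set cz : C * E | alpha cz.1 = p cz.2],
        continuous (fun cz => w cz.1 cz.2)},
      (forall c z, alpha c = p z -> p (w c z) = beta c),
      (forall c d z, alpha c = beta d -> alpha d = p z ->
         w (gd_comp Cg c d) z = w c (w d z)),
      (forall c z, alpha c = p z -> w (gd_inv Cg c) (w c z) = z) &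
      (forall c z g, alpha c = p z -> w c (act z g) = act (w c z) g)].

Definition rep_gauge_act (w : C -> E -> E) (chi : gauge_elt xi) : C -> E -> E :=
  fun c z => ga_inv chi (w c (ga_fun chi z)).

Definition ent_rep (L : set C) (V : set G) (w w' : C -> E -> E) : Prop :=
  forall c z, L c -> alpha c = p z -> V (pb_gamma xi (w c z) (w' c z)).

End Reps.

(* Main.v *)
Require Import Defs.
From mathcomp Require Import all_boot all_order all_algebra.
From mathcomp Require Import all_classical all_reals all_analysis.
Local Open Scope classical_set_scope.

Section GroupLemmas.
Context (G : topologicalType) (TG : TopGroup G).
Local Notation mul := (tg_mul TG).
Local Notation inv := (tg_inv TG).
Local Notation one := (tg_one TG).

Lemma tg_mulVr x : mul x (inv x) = one.
Proof.
rewrite -[mul x (inv x)](tg_mul1 TG) -[in X in mul X _](tg_mulV TG (inv x)).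
by rewrite -(tg_mulA TG) (tg_mulA TG (inv x)) (tg_mulV TG) (tg_mul1 TG) (tg_mulV TG).
Qed.

Lemma tg_mulr1 x : mul x one = x.
Proof. by rewrite -(tg_mulV TG x) (tg_mulA TG) tg_mulVr (tg_mul1 TG). Qed.

Lemma tg_inv1 : inv one = one.
Proof. by rewrite -[inv one]tg_mulr1 (tg_mulV TG). Qed.

Lemma tg_invK x : inv (inv x) = x.
Proof. by rewrite -[inv (inv x)]tg_mulr1 -(tg_mulV TG x) (tg_mulA TG) (tg_mulV TG) (tg_mul1 TG). Qed.

Lemma mul_nbhs (V : set G) : nbhs one V ->
  exists A B : set G, [/\ nbhs one A, nbhs one B & forall a b, A a -> B b -> V (mul a b)].
Proof.
move=> nV.
have := @tg_mul_cont G TG (one, one).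
move=> H; have := H V; rewrite /= (tg_mul1 TG) => /(_ nV).
case=> /= -[A B] /= [nA nB] AB.
exists A, B; split => // a b Aa Bb.
by have := AB (a, b); apply; split.
Qed.

Lemma exists_W (V : set G) : sym_open_nbhd TG V ->
  exists W : set G, sym_open_nbhd TG W /\
    forall a b c, W a -> W b -> W c -> V (mul a (mul b c)).
Proof.
case=> oV V1 _.
have nV : nbhs one V by apply: open_nbhs_nbhs; split.
have [A1 [B1 [nA1 nB1 AB1]]] := mul_nbhs V nV.
have [A2 [B2 [nA2 nB2 AB2]]] := mul_nbhs B1 nB1.
set W0 := (A1 `&` A2 `&` B2)°.
have oW0 : open W0 by exact: open_interior.
have W01 : W0 one.
  apply: nbhs_singleton; apply: nbhs_interior.
  by apply: filterI => //; apply: filterI.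
set W := W0 `&` inv @^-1` W0.
exists W; split.
- split.
  + apply: openI => //; apply: open_comp => //.
    move=> x _; exact: tg_inv_cont.
  + by split => //=; rewrite tg_inv1.
  + by move=> g [Wg Wig]; split => //=; rewrite tg_invK.
- move=> a b c [Wa _] [Wb _] [Wc _].
  have [[Aa _] _] := interior_subset Wa.
  have [[_ Ab] _] := interior_subset Wb.
  have [_ Bc] := interior_subset Wc.
  by apply: AB1 => //; apply: AB2.
Qed.
End GroupLemmas.

Theorem proposition3p3
  (G : topologicalType) (TG : TopGroup G) (E X C : topologicalType)
  (xi : principal_bundle TG E X) (Cg : groupoid X C) :
  SIN TG -> numerable xi ->
  forall (L : set C) (V : set G), compact L -> sym_open_nbhd TG V ->
  exists (L' : set C) (V' : set G) (K : set X) (V'' : set G),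
    [/\ compact L', sym_open_nbhd TG V', compact K, sym_open_nbhd TG V'' &
      forall (w w' : C -> E -> E) (chi chi' : gauge_elt xi),
        is_rep xi Cg w -> is_rep xi Cg w' ->
        ent_rep xi Cg L' V' w w' -> ent_gauge K V'' chi chi' ->
        ent_rep xi Cg L V (rep_gauge_act w chi) (rep_gauge_act w' chi')].
Proof.
move=> _ _ L V cL sV.
have [W [sW HW]] := @exists_W G TG V sV.
have gact : forall y h, pb_gamma xi (pb_act xi y h) y = h.
  move=> y h; apply: (@pb_free _ _ _ _ xi y).
  by rewrite -pb_gammaP // pb_p_act.
exists L, W, (gd_src Cg @` L `|` gd_tgt Cg @` L), W; split => //.
  apply: compactU; apply: continuous_compact => //.
  - move=> x; apply: continuous_subspaceT => ?; exact: gd_src_cont.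
  - move=> x; apply: continuous_subspaceT => ?; exact: gd_tgt_cont.
move=> w w' chi chi' [_ wp _ _ wact] [_ w'p _ _ _] ent entg c z Lc azp.
rewrite /rep_gauge_act.
set u := ga_fun chi' z.
have pu : pb_p xi u = pb_p xi z by rewrite ga_p.
set g := pb_gamma xi (ga_fun chi z) u.
have Hg : ga_fun chi z = pb_act xi u g by apply: pb_gammaP; rewrite ga_p.
have Wg : W g by apply: entg; left; exists c.
set b := w' c u.
set k := pb_gamma xi (w c u) b.
have Hk : w c u = pb_act xi b k by apply: pb_gammaP; rewrite wp ?w'p // pu.
have Wk : W k by apply: ent => //; rewrite pu.
set y := ga_inv chi' b.
have Hy : ga_fun chi' y = b by rewrite ga_invK.
have py : pb_p xi y = gd_tgt Cg c by rewrite -(ga_p chi' y) Hy w'p // pu.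
set gy := pb_gamma xi (ga_fun chi y) (ga_fun chi' y).
have Hgy : ga_fun chi y = pb_act xi b gy by rewrite -Hy; apply: pb_gammaP; rewrite !ga_p.
have Wgy : W gy by apply: entg; right; exists c; rewrite // ?py.
have Hb : b = pb_act xi (ga_fun chi y) (tg_inv TG gy).
  by rewrite Hgy pb_act_mul tg_mulVr pb_act_one.
have -> : w c (ga_fun chi z) =
    ga_fun chi (pb_act xi y (tg_mul TG (tg_inv TG gy) (tg_mul TG k g))).
  rewrite Hg wact ?pu // Hk pb_act_mul {1}Hb pb_act_mul ga_equiv //.
rewrite ga_funK gact; apply: HW => //.
by case: sW => _ _ /(_ gy Wgy).
Qed.
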